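(* Let $\lambda_0>0$, $k_0 = 2\pi/\lambda_0$, $z_\text{b}>0$, and let $x_\text{b}^{(1)} < x_\text{b}^{(2)}$ be real numbers. Set $\mathcal{O}_\text{d} = (-\infty, x_\text{b}^{(1)}) \cup (x_\text{b}^{(2)}, +\infty)$. For $z>z_\text{b}$ and $x,\nu\in\mathbb{R}$ define $$K(z,x,\nu) = \frac{j}{\lambda_0 \sqrt{z_\text{b}\,(z-z_\text{b})}} \int_{\mathcal{O}_\text{d}} e^{-j \frac{k_0}{2 z_\text{b}} (\xi-\nu)^2}\, e^{-j \frac{k_0}{2 (z-z_\text{b})} (x-\xi)^2} \, \mathrm{d}\xi .$$ Then $$K(z,x,\nu) = \frac{1}{2} \sqrt{\frac{j}{\lambda_0 \, z}} \, e^{-j \frac{k_0}{2 z} (\nu-x)^2} \, F(z,x,\nu),$$ where $$F(z,x,\nu) = 1 + \operatorname{Erf}\!\left(\sqrt{\frac{j k_0 z}{2 z_\text{b} (z-z_\text{b})}} \left[ x_\text{b}^{(1)} - \frac{z_\text{b} x}{z} - \frac{(z-z_\text{b}) \nu}{z}\right]\right) + \operatorname{Erfc}\!\left(\sqrt{\frac{j k_0 z}{2 z_\text{b} (z-z_\text{b})}} \left[ x_\text{b}^{(2)} - \frac{z_\text{b} x}{z} - \frac{(z-z_\text{b}) \nu}{z}\right]\right).$$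
   Context: Here $j$ denotes the imaginary unit ($j^2=-1$). Square roots of complex numbers are principal-branch square roots (so $\sqrt{j}=e^{j\pi/4}$, and $\sqrt{j\,c}=e^{j\pi/4}\sqrt{c}$ for $c>0$). The integrals over the unbounded intervals are oscillatory and are understood as improper (limit) integrals. $\operatorname{Erf}(w) = \frac{2}{\sqrt{\pi}}\int_0^w e^{-t^2}\,\mathrm{d}t$ is the error function extended to complex arguments (an entire function), and $\operatorname{Erfc}(w) = 1 - \operatorname{Erf}(w)$ is the complementary error function. The function $K$ is the paraxial knife-edge diffraction kernel from an aperture point $\nu$ on the plane $z=0$ to an observation point $(z,x)$ beyond a thin obstacle occupying $[x_\text{b}^{(1)},x_\text{b}^{(2)}]$ in the plane $z=z_\text{b}$. *)

(* Defs.v *)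
From Stdlib Require Import Reals.
From Coquelicot Require Import Coquelicot.
Open Scope R_scope.

Definition Cj : C := (0, 1).

Definition cexp (z : C) : C := (exp (fst z) * cos (snd z), exp (fst z) * sin (snd z)).

Definition Csqrt (z : C) : C :=
  let r := Cmod z in
  let a := sqrt ((r + fst z) / 2) in
  let b := sqrt ((r - fst z) / 2) in
  if Rlt_dec (snd z) 0 then (a, - b) else (a, b).

(* Erf(w) = 2/sqrt(pi) * int_0^w e^{-t^2} dt, integrated along the segment [0,w]
   (t = s w, s in [0,1]); this is the entire extension of erf. *)
Definition Erf (w : C) : C :=
  Cmult (RtoC (2 / sqrt PI))
        (Cmult w (@RInt C_R_CompleteNormedModule (fun s : R => cexp (Copp (Cmult (Cmult (RtoC s) w) (Cmult (RtoC s) w)))) 0 1)).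

Definition Erfc (w : C) : C := Cminus (RtoC 1) (Erf w).

Definition Kintegrand (lambda0 zb z x nu : R) (xi : R) : C :=
  let k0 := 2 * PI / lambda0 in
  Cmult (cexp (Cmult Cj (RtoC (- (k0 / (2 * zb)) * (xi - nu) ^ 2))))
        (cexp (Cmult Cj (RtoC (- (k0 / (2 * (z - zb))) * (x - xi) ^ 2)))).

(* K(z,x,nu), given the values I1, I2 of the improper integrals over
   (-oo, xb1) and (xb2, +oo) *)
Definition Kvalue (lambda0 zb z : R) (I1 I2 : C) : C :=
  Cmult (Cmult Cj (RtoC (1 / (lambda0 * sqrt (zb * (z - zb)))))) (Cplus I1 I2).

Definition Ffun (lambda0 zb xb1 xb2 z x nu : R) : C :=
  let k0 := 2 * PI / lambda0 in
  let s := Csqrt (Cmult Cj (RtoC (k0 * z / (2 * zb * (z - zb))))) in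
  let c := zb * x / z + (z - zb) * nu / z in
  Cplus (Cplus (RtoC 1) (Erf (Cmult s (RtoC (xb1 - c)))))
        (Erfc (Cmult s (RtoC (xb2 - c)))).

Definition Kclosed (lambda0 zb xb1 xb2 z x nu : R) : C :=
  let k0 := 2 * PI / lambda0 in
  Cmult (Cmult (Cmult (RtoC (1/2)) (Csqrt (Cmult Cj (RtoC (1 / (lambda0 * z))))))
               (cexp (Cmult Cj (RtoC (- (k0 / (2 * z)) * (nu - x) ^ 2)))))
        (Ffun lambda0 zb xb1 xb2 z x nu).

(* Main.v *)
Require Import Defs.
From Stdlib Require Import Reals.
From Coquelicot Require Import Coquelicot.
Open Scope R_scope.
From Stdlib Require Import Lra.

Lemma cont_exp x : continuity_pt exp x.
Proof. apply derivable_continuous_pt, derivable_pt_exp. Qed.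
Lemma cont_cos x : continuity_pt cos x.
Proof. apply derivable_continuous_pt, derivable_pt_cos. Qed.
Lemma cont_sin x : continuity_pt sin x.
Proof. apply derivable_continuous_pt, derivable_pt_sin. Qed.

Lemma exRc (f : R -> R) a b : (forall z, ex_derive f z) -> ex_RInt f a b.
Proof.
  intros H. apply (@ex_RInt_continuous R_CompleteNormedModule). intros z _.
  exact (@ex_derive_continuous R_AbsRing R_NormedModule f z (H z)).
Qed.

Lemma scalR (a b : R) : @scal R_AbsRing R_ModuleSpace a b = a * b.
Proof. reflexivity. Qed.

Lemma scalR2 (a b : R) : @scal R_Ring (NormedModule.ModuleSpace R_AbsRing R_NormedModule) a b = a*b.
Proof. reflexivity. Qed.
Ltac rsc := repeat (rewrite scalR2 || rewrite scalR).

Ltac req := match goal with |- @eq _ ?a ?b => change (@eq R a b) end.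

Definition gI (x : R) := RInt (fun t => exp (-(t^2))) 0 x.
Definition uu (x t : R) := exp (-(x^2*(1+t^2))) / (1+t^2).

Lemma ex_RInt_gauss a b : ex_RInt (fun t => exp (-(t^2))) a b.
Proof. apply exRc. intros z. auto_derive. auto. Qed.

Lemma pos1t2 t : 0 < 1 + t^2.
Proof. nra. Qed.

Lemma ex_RInt_uu x a b : ex_RInt (uu x) a b.
Proof.
  apply exRc. intros z. unfold uu. auto_derive.
  pose proof (pos1t2 z). simpl in H. nra.
Qed.

Lemma is_derive_gI x : is_derive gI x (exp (-(x^2))).
Proof.
  apply (is_derive_RInt (fun t => exp (-(t^2))) gI 0 x).
  - apply filter_forall. intros y. apply (@RInt_correct R_CompleteNormedModule), ex_RInt_gauss.
  - apply ex_derive_continuous. auto_derive. auto.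
Qed.

Lemma is_RInt_gauss_scaled x :
  is_RInt (fun t => -2*x*exp (-(x^2*(1+t^2)))) 0 1 (-2 * exp (-(x^2)) * gI x).
Proof.
  assert (H : is_RInt (fun t => exp (-(t^2))) (x*0+0) (x*1+0) (gI x)).
  { replace (x*0+0) with 0 by ring. replace (x*1+0) with x by ring.
    apply (@RInt_correct R_CompleteNormedModule), ex_RInt_gauss. }
  apply is_RInt_comp_lin in H.
  apply (is_RInt_scal _ _ _ (-2 * exp (-(x^2)))) in H.
  eapply is_RInt_ext; [|exact H].
  intros t _. rsc. match goal with |- ?a = ?b => change (@eq R a b) end.
  replace (- (x ^ 2 * (1 + t ^ 2))) with (- x ^ 2 + - (x * t + 0) ^ 2) by ring.
  change (scal x ?c) with (x * c). rewrite exp_plus. ring.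
Qed.

Ltac rsc2 := repeat match goal with |- context [scal ?a ?b] => change (scal a b) with (a*b) end.

Lemma is_derive_eq (f : R -> R) x l l' : is_derive f x l -> l = l' -> is_derive f x l'.
Proof. intros H ->. exact H. Qed.

Definition hh (x : R) := gI x ^ 2 + RInt (uu x) 0 1.

Lemma Derive_uu x t : Derive (fun u => uu u t) x = -2*x*exp (-(x^2*(1+t^2))).
Proof.
  apply is_derive_unique. unfold uu. auto_derive.
  - pose proof (pos1t2 t). simpl in H. nra.
  - pose proof (pos1t2 t). simpl in *. field. nra.
Qed.

Lemma is_derive_hh x : is_derive hh x 0.
Proof.
  unfold hh.
  apply is_derive_eq with (INR 2 * exp (-(x^2)) * gI x ^ Init.Nat.pred 2 + (-2 * exp (-(x^2)) * gI x)).
  2: simpl; ring.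
  apply (@is_derive_plus R_AbsRing R_NormedModule).
  - apply is_derive_pow. apply is_derive_gI.
  - rewrite <- (is_RInt_unique _ _ _ _ (is_RInt_gauss_scaled x)).
    replace (RInt (fun t => -2*x*exp (-(x^2*(1+t^2)))) 0 1)
      with (RInt (fun t => Derive (fun u => uu u t) x) 0 1).
    2: { apply RInt_ext. intros. apply Derive_uu. }
    apply is_derive_RInt_param.
    + apply filter_forall. intros y t _. unfold uu. auto_derive.
      pose proof (pos1t2 t). simpl in H. nra.
    + intros t _. apply continuity_2d_pt_ext with (f := fun u v => -2*u*exp (-(u^2*(1+v^2)))).
      { intros. symmetry. apply Derive_uu. }
      apply continuity_2d_pt_mult.
      * apply continuity_2d_pt_mult. apply continuity_2d_pt_const. apply continuity_2d_pt_id1.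
      * apply continuity_1d_2d_pt_comp with (f := exp) (g := fun u v => -(u^2*(1+v^2))).
        apply cont_exp.
        apply continuity_2d_pt_opp. simpl.
        repeat first [ apply continuity_2d_pt_mult | apply continuity_2d_pt_plus
                     | apply continuity_2d_pt_id1 | apply continuity_2d_pt_id2 | apply continuity_2d_pt_const ].
    + apply filter_forall. intros y. apply ex_RInt_uu.
Qed.

Lemma hh_const x : hh x = hh 0.
Proof.
  assert (H := is_RInt_derive hh (fun _ => 0) 0 x (fun y _ => is_derive_hh y)
     (fun y _ => continuous_const (0:R) y)).
  apply is_RInt_unique in H. rewrite RInt_const in H.
  change (scal (x-0) 0) with ((x-0)*0) in H.
  unfold minus, plus, opp in H. simpl in H. 
  assert (hh x - hh 0 = 0) by lra. lra.
Qed.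

Lemma hh0 : hh 0 = PI / 4.
Proof.
  unfold hh, gI. rewrite RInt_point. 
  assert (H : is_RInt (uu 0) 0 1 (atan 1 - atan 0)).
  { apply (is_RInt_ext (fun t => / (1 + t²))).
    - intros t _. unfold uu, Rsqr. simpl. rewrite Rmult_0_l, Rmult_0_l, Ropp_0, exp_0. field.
      pose proof (pos1t2 t). simpl in H. nra.
    - apply (is_RInt_derive atan (fun t => / (1 + t²))).
      + intros. apply is_derive_atan.
      + intros. apply (@ex_derive_continuous R_AbsRing R_NormedModule). auto_derive. unfold Rsqr. nra. }
  apply (@is_RInt_unique R_CompleteNormedModule) in H. rewrite H. rewrite atan_1, atan_0.
  unfold zero; simpl. req. lra.
Qed.

Lemma int_uu_bounds x : 0 <= RInt (uu x) 0 1 <= exp (-(x^2)).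
Proof.
  split.
  - apply RInt_ge_0. lra. apply ex_RInt_uu. intros t _. unfold uu.
    pose proof (pos1t2 t). pose proof (exp_pos (-(x^2*(1+t^2)))).
    apply Rlt_le, Rdiv_lt_0_compat; lra.
  - replace (exp (-(x^2))) with (RInt (fun _ => exp (-(x^2))) 0 1).
    2: { rewrite RInt_const. rsc2. req. ring. }
    apply RInt_le. lra. apply ex_RInt_uu. apply ex_RInt_const.
    intros t _. unfold uu. pose proof (pos1t2 t).
    pose proof (exp_pos (-(x^2*(1+t^2)))).
    assert (exp (-(x^2*(1+t^2))) <= exp (-(x^2))).
    { apply exp_le_3 || idtac. destruct (Req_dec (x^2*t^2) 0).
      - right. f_equal. nra.
      - left. apply exp_increasing. assert (0 <= x^2*t^2) by (apply Rmult_le_pos; apply pow2_ge_0). lra. }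
    apply Rle_trans with (exp (-(x^2*(1+t^2)))); auto.
    unfold Rdiv. rewrite <- (Rmult_1_r (exp _)) at 2. apply Rmult_le_compat_l. lra.
    rewrite <- Rinv_1. apply Rinv_le_contravar. lra. pose proof (pow2_ge_0 t). lra.
Qed.

Lemma gI_ge0 x : 0 <= x -> 0 <= gI x.
Proof.
  intros Hx. apply RInt_ge_0. auto. apply ex_RInt_gauss. intros. left. apply exp_pos.
Qed.

Lemma sqrtPI_pos : 0 < sqrt PI.
Proof. apply sqrt_lt_R0, PI_RGT_0. Qed.

Lemma gauss_bound x : 0 <= x -> Rabs (gI x - sqrt PI / 2) <= 2 / sqrt PI * exp (-(x^2)).
Proof.
  intros Hx.
  pose proof (hh_const x) as H. rewrite hh0 in H. unfold hh in H.
  pose proof (int_uu_bounds x). pose proof (gI_ge0 x Hx). pose proof sqrtPI_pos.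
  set (s := sqrt PI) in *. set (g := gI x) in *. set (U := RInt (uu x) 0 1) in *.
  assert (Hs2 : s * s = PI) by (apply sqrt_sqrt; left; apply PI_RGT_0).
  assert (Hd : g - s/2 = - U / (g + s/2)).
  { assert (Hg : g*g + U = s*s/4) by (rewrite Hs2; simpl in H; lra).
    apply Rmult_eq_reg_r with (g+s/2). 2: lra.
    unfold Rdiv. rewrite Rmult_assoc, Rinv_l by lra. nra. }
  rewrite Hd. unfold Rdiv. rewrite Rabs_mult, Rabs_Ropp, Rabs_right by lra.
  rewrite Rabs_right. 2: { apply Rle_ge, Rlt_le, Rinv_0_lt_compat. lra. }
  rewrite (Rmult_comm (2 * / s)).
  apply Rmult_le_compat. lra. left; apply Rinv_0_lt_compat; lra. lra.
  replace (2 * / s) with (/ (s/2)) by (field; lra).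
  apply Rinv_le_contravar; lra.
Qed.

Definition EE p y s := exp (-(s^2*(p^2 - y^2))).
Definition ps p y s := 2*s^2*p*y.
Definition g1 p y s := EE p y s * (p * cos (ps p y s) + y * sin (ps p y s)).
Definition g2 p y s := EE p y s * (y * cos (ps p y s) - p * sin (ps p y s)).
Definition A1 p y s := s * EE p y s * sin (ps p y s).
Definition A2 p y s := s * EE p y s * cos (ps p y s).
Definition d1 p y s := EE p y s * (4*s^2*p*y * cos (ps p y s) + sin (ps p y s) * (1 + 2*s^2*(y^2 - p^2))).
Definition d2 p y s := EE p y s * (cos (ps p y s) * (1 - 2*s^2*(p^2-y^2)) - 4*s^2*p*y * sin (ps p y s)).

Lemma der_g1 p y s : is_derive (fun u => g1 p u s) y (d1 p y s).
Proof. unfold g1, d1, EE, ps. auto_derive. auto. simpl. unfold Rminus. ring. Qed.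
Lemma der_g2 p y s : is_derive (fun u => g2 p u s) y (d2 p y s).
Proof. unfold g2, d2, EE, ps. auto_derive. auto. simpl. unfold Rminus. ring. Qed.
Lemma der_A1 p y s : is_derive (fun t => A1 p y t) s (d1 p y s).
Proof. unfold A1, d1, EE, ps. auto_derive. auto. simpl. unfold Rminus. ring. Qed.
Lemma der_A2 p y s : is_derive (fun t => A2 p y t) s (d2 p y s).
Proof. unfold A2, d2, EE, ps. auto_derive. auto. simpl. unfold Rminus. ring. Qed.

Ltac c2d := repeat first [ apply continuity_2d_pt_mult | apply continuity_2d_pt_plus
  | apply continuity_2d_pt_minus | apply continuity_2d_pt_opp | apply continuity_2d_pt_id1
  | apply continuity_2d_pt_id2 | apply continuity_2d_pt_const
  | (apply continuity_1d_2d_pt_comp with (f := exp); [apply cont_exp|])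
  | (apply continuity_1d_2d_pt_comp with (f := cos); [apply cont_cos|])
  | (apply continuity_1d_2d_pt_comp with (f := sin); [apply cont_sin|]) ].

Definition h1 p y := RInt (g1 p y) 0 1.
Definition h2 p y := RInt (g2 p y) 0 1.

Lemma ex_RInt_g1 p y a b : ex_RInt (g1 p y) a b.
Proof. apply exRc. intros z. unfold g1, EE, ps. auto_derive. auto. Qed.
Lemma ex_RInt_g2 p y a b : ex_RInt (g2 p y) a b.
Proof. apply exRc. intros z. unfold g2, EE, ps. auto_derive. auto. Qed.

Lemma A1_0 p y : A1 p y 0 = 0.
Proof. unfold A1. ring. Qed.
Lemma A2_0 p y : A2 p y 0 = 0.
Proof. unfold A2. ring. Qed.

Lemma RInt_d1 p y : RInt (d1 p y) 0 1 = A1 p y 1.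
Proof.
  apply is_RInt_unique.
  replace (A1 p y 1) with (minus (A1 p y 1) (A1 p y 0)).
  2: { rewrite A1_0. unfold minus, plus, opp; simpl. req. ring. }
  apply (is_RInt_derive (A1 p y)). intros; apply der_A1.
  intros. apply (@ex_derive_continuous R_AbsRing R_NormedModule). unfold d1, EE, ps. auto_derive. auto.
Qed.
Lemma RInt_d2 p y : RInt (d2 p y) 0 1 = A2 p y 1.
Proof.
  apply is_RInt_unique.
  replace (A2 p y 1) with (minus (A2 p y 1) (A2 p y 0)).
  2: { rewrite A2_0. unfold minus, plus, opp; simpl. req. ring. }
  apply (is_RInt_derive (A2 p y)). intros; apply der_A2.
  intros. apply (@ex_derive_continuous R_AbsRing R_NormedModule). unfold d2, EE, ps. auto_derive. auto.
Qed.

Lemma der_h1 p y : is_derive (h1 p) y (A1 p y 1).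
Proof.
  rewrite <- RInt_d1. unfold h1.
  replace (RInt (d1 p y) 0 1) with (RInt (fun t => Derive (fun u => g1 p u t) y) 0 1).
  2: { apply RInt_ext. intros. apply is_derive_unique, der_g1. }
  apply is_derive_RInt_param.
  - apply filter_forall. intros u t _. eexists. apply der_g1.
  - intros t _. apply continuity_2d_pt_ext with (f := fun u v => d1 p u v).
    { intros. symmetry. apply is_derive_unique, der_g1. }
    unfold d1, EE, ps. simpl. c2d.
  - apply filter_forall. intros. apply ex_RInt_g1.
Qed.
Lemma der_h2 p y : is_derive (h2 p) y (A2 p y 1).
Proof.
  rewrite <- RInt_d2. unfold h2.
  replace (RInt (d2 p y) 0 1) with (RInt (fun t => Derive (fun u => g2 p u t) y) 0 1).
  2: { apply RInt_ext. intros. apply is_derive_unique, der_g2. }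
  apply is_derive_RInt_param.
  - apply filter_forall. intros u t _. eexists. apply der_g2.
  - intros t _. apply continuity_2d_pt_ext with (f := fun u v => d2 p u v).
    { intros. symmetry. apply is_derive_unique, der_g2. }
    unfold d2, EE, ps. simpl. c2d.
  - apply filter_forall. intros. apply ex_RInt_g2.
Qed.

Lemma normR (x : R) : @norm R_AbsRing R_NormedModule x = Rabs x.
Proof. reflexivity. Qed.

Lemma int_expbound p : 0 < p -> is_RInt (fun y => exp (p*(y-p))) 0 p ((1 - exp (-(p^2)))/p).
Proof.
  intros Hp.
  replace ((1 - exp (-(p^2)))/p) with (minus (exp (p*(p-p))/p) (exp (p*(0-p))/p)).
  2: { unfold minus, plus, opp; simpl. replace (p*(p-p)) with 0 by ring. rewrite exp_0.
       replace (p*(0-p)) with (-(p*(p*1))) by ring. req. field. lra. }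
  apply (is_RInt_derive (fun y => exp (p*(y-p))/p)).
  - intros. auto_derive. lra. unfold Rminus. field. lra.
  - intros. apply (@ex_derive_continuous R_AbsRing R_NormedModule). auto_derive. auto.
Qed.

Lemma exp_le a b : a <= b -> exp a <= exp b.
Proof. intros [H|H]. left; apply exp_increasing; auto. right; subst; auto. Qed.

Lemma A_bound p y : 0 < p -> 0 <= y <= p ->
  Rabs (A1 p y 1) <= exp (p*(y-p)) /\ Rabs (A2 p y 1) <= exp (p*(y-p)).
Proof.
  intros Hp Hy.
  assert (HE : EE p y 1 <= exp (p*(y-p))).
  { unfold EE. apply exp_le. simpl. nra. }
  assert (HE0 : 0 < EE p y 1) by apply exp_pos.
  unfold A1, A2. split; rewrite !Rabs_mult, Rabs_R1, (Rabs_right (EE p y 1)) by lra.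
  - pose proof (Rabs_le (sin (ps p y 1))) as _.
    assert (Rabs (sin (ps p y 1)) <= 1) by (apply Rabs_le; apply SIN_bound).
    pose proof (Rabs_pos (sin (ps p y 1))). nra.
  - assert (Rabs (cos (ps p y 1)) <= 1) by (apply Rabs_le; apply COS_bound).
    pose proof (Rabs_pos (cos (ps p y 1))). nra.
Qed.

Lemma h_diff_bound p : 0 < p ->
  Rabs (h1 p p - h1 p 0) <= 1/p /\ Rabs (h2 p p - h2 p 0) <= 1/p.
Proof.
  intros Hp.
  assert (Hb : (1 - exp (-(p^2)))/p <= 1/p).
  { unfold Rdiv. apply Rmult_le_compat_r. left; apply Rinv_0_lt_compat; lra.
    pose proof (exp_pos (-(p^2))). lra. }
  split.
  - eapply Rle_trans; [|exact Hb]. rewrite <- normR.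
    apply (norm_RInt_le (fun y => A1 p y 1) (fun y => exp (p*(y-p))) 0 p).
    + lra.
    + intros. rewrite normR. apply A_bound; lra.
    + apply (is_RInt_derive (h1 p) (fun y => A1 p y 1)).
      * intros. apply der_h1.
      * intros. apply (@ex_derive_continuous R_AbsRing R_NormedModule). unfold A1, EE, ps. auto_derive. auto.
    + apply int_expbound. exact Hp.
  - eapply Rle_trans; [|exact Hb]. rewrite <- normR.
    apply (norm_RInt_le (fun y => A2 p y 1) (fun y => exp (p*(y-p))) 0 p).
    + lra.
    + intros. rewrite normR. apply A_bound; lra.
    + apply (is_RInt_derive (h2 p) (fun y => A2 p y 1)).
      * intros. apply der_h2.
      * intros. apply (@ex_derive_continuous R_AbsRing R_NormedModule). unfold A2, EE, ps. auto_derive. auto.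
    + apply int_expbound. exact Hp.
Qed.

Lemma h1_0 p : h1 p 0 = gI p.
Proof.
  unfold h1, gI.
  assert (H : is_RInt (fun t => exp (-(t^2))) (p*0+0) (p*1+0) (gI p)).
  { replace (p*0+0) with 0 by ring. replace (p*1+0) with p by ring.
    apply (@RInt_correct R_CompleteNormedModule), ex_RInt_gauss. }
  apply is_RInt_comp_lin in H. apply is_RInt_unique.
  eapply is_RInt_ext; [|exact H]. intros s _. change (scal p ?c) with (p * c). unfold g1, EE, ps.
  rewrite Rmult_0_r, Rmult_0_l, cos_0.
  replace (-(s^2*(p^2 - 0^2))) with (- (p*s+0)^2) by ring. req. ring.
Qed.

Lemma h2_0 p : h2 p 0 = 0.
Proof.
  unfold h2. rewrite (RInt_ext _ (fun _ => 0)). rewrite RInt_const. rsc2. req. ring.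
  intros s _. unfold g2, EE, ps. rewrite Rmult_0_r, sin_0. req. ring.
Qed.

Definition FF (w : C) (s : R) : C := cexp (Copp (Cmult (Cmult (RtoC s) w) (Cmult (RtoC s) w))).

Lemma FF_eq p y s : FF (p,y) s = (EE p y s * cos (ps p y s), - (EE p y s * sin (ps p y s))).
Proof.
  unfold FF, cexp, Cmult, Copp, RtoC, EE, ps. simpl.
  match goal with |- (exp ?A * cos ?B, exp ?A' * sin ?B') = _ =>
    replace A with (-(s*(s*1)*(p*(p*1)-y*(y*1)))) by ring;
    replace B with (-(2*(s*(s*1))*p*y)) by ring;
    replace A' with (-(s*(s*1)*(p*(p*1)-y*(y*1)))) by ring;
    replace B' with (-(2*(s*(s*1))*p*y)) by ring end.
  rewrite cos_neg, sin_neg. f_equal; ring.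
Qed.

Lemma ex_RInt_F1 p y : ex_RInt (fun s => EE p y s * cos (ps p y s)) 0 1.
Proof. apply exRc. intros. unfold EE, ps. auto_derive. auto. Qed.
Lemma ex_RInt_F2 p y : ex_RInt (fun s => - (EE p y s * sin (ps p y s))) 0 1.
Proof. apply exRc. intros. unfold EE, ps. auto_derive. auto. Qed.

Lemma RInt_FF p y : @RInt C_R_CompleteNormedModule (FF (p,y)) 0 1 =
  (RInt (fun s => EE p y s * cos (ps p y s)) 0 1, RInt (fun s => - (EE p y s * sin (ps p y s))) 0 1).
Proof.
  rewrite (@RInt_ext C_R_CompleteNormedModule _ (fun s => (EE p y s * cos (ps p y s), - (EE p y s * sin (ps p y s))))).
  2: { intros. apply FF_eq. }
  apply (@is_RInt_unique C_R_CompleteNormedModule). apply (is_RInt_fct_extend_pair (U:=R_NormedModule) (V:=R_NormedModule)); simpl.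
  - apply (@RInt_correct R_CompleteNormedModule), ex_RInt_F1.
  - apply (@RInt_correct R_CompleteNormedModule), ex_RInt_F2.
Qed.

Lemma Erf_h p y : Erf (p,y) = Cmult (RtoC (2 / sqrt PI)) (h1 p y, h2 p y).
Proof.
  unfold Erf. f_equal.
  change (fun s : R => cexp (Copp (Cmult (Cmult (RtoC s) (p, y)) (Cmult (RtoC s) (p, y)))))
    with (FF (p,y)).
  rewrite RInt_FF.
  set (I1 := RInt (fun s => EE p y s * cos (ps p y s)) 0 1).
  set (I2 := RInt (fun s => - (EE p y s * sin (ps p y s))) 0 1).
  unfold Cmult. simpl. f_equal.
  - unfold h1. symmetry. apply is_RInt_unique.
    apply (is_RInt_ext (fun s => p * (EE p y s * cos (ps p y s)) - y * (- (EE p y s * sin (ps p y s))))).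
    { intros. unfold g1. req. ring. }
    apply (@is_RInt_minus R_NormedModule).
    + apply (@is_RInt_scal R_NormedModule). apply (@RInt_correct R_CompleteNormedModule), ex_RInt_F1.
    + apply (@is_RInt_scal R_NormedModule). apply (@RInt_correct R_CompleteNormedModule), ex_RInt_F2.
  - unfold h2. symmetry. apply is_RInt_unique.
    apply (is_RInt_ext (fun s => p * (- (EE p y s * sin (ps p y s))) + y * (EE p y s * cos (ps p y s)))).
    { intros. unfold g2. req. ring. }
    apply (@is_RInt_plus R_NormedModule).
    + apply (@is_RInt_scal R_NormedModule). apply (@RInt_correct R_CompleteNormedModule), ex_RInt_F2.
    + apply (@is_RInt_scal R_NormedModule). apply (@RInt_correct R_CompleteNormedModule), ex_RInt_F1.
Qed.

Lemma Cmult_Cj r : Cmult Cj (RtoC r) = (0, r).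
Proof. unfold Cmult, Cj, RtoC. simpl. f_equal; ring. Qed.

Lemma cexp_j r : cexp (Cmult Cj (RtoC r)) = (cos r, sin r).
Proof. rewrite Cmult_Cj. unfold cexp. simpl. rewrite exp_0. f_equal; ring. Qed.

Lemma Csqrt_j b : 0 < b -> Csqrt (Cmult Cj (RtoC b)) = (sqrt (b/2), sqrt (b/2)).
Proof.
  intros Hb. rewrite Cmult_Cj. unfold Csqrt, Cmod. simpl.
  replace (0 * (0 * 1) + b * (b * 1)) with (b*b) by ring.
  rewrite sqrt_square by lra.
  destruct (Rlt_dec b 0). lra. f_equal; f_equal; field.
Qed.

Lemma is_RInt_Cmult (k : C) (f : R -> C) a b (l : C) :
  @is_RInt C_R_NormedModule f a b l ->
  @is_RInt C_R_NormedModule (fun t => Cmult k (f t)) a b (Cmult k l).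
Proof.
  intros H. destruct k as [k1 k2].
  pose proof (is_RInt_fct_extend_fst (U:=R_NormedModule) (V:=R_NormedModule) f a b l H) as H1.
  pose proof (is_RInt_fct_extend_snd (U:=R_NormedModule) (V:=R_NormedModule) f a b l H) as H2.
  destruct l as [l1 l2]. simpl in H1, H2.
  unfold Cmult. simpl.
  apply (is_RInt_fct_extend_pair (U:=R_NormedModule) (V:=R_NormedModule)); simpl.
  - apply (@is_RInt_minus R_NormedModule); apply (@is_RInt_scal R_NormedModule); assumption.
  - apply (@is_RInt_plus R_NormedModule); apply (@is_RInt_scal R_NormedModule); assumption.
Qed.

Lemma FF_opp w s : FF (Copp w) s = FF w s.
Proof. unfold FF. f_equal. ring. Qed.

Lemma Erf_opp w : Erf (Copp w) = Copp (Erf w).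
Proof.
  unfold Erf.
  rewrite (@RInt_ext C_R_CompleteNormedModule _ (FF w)).
  2: { intros. apply FF_opp. }
  change (fun s : R => cexp (Copp (Cmult (Cmult (RtoC s) w) (Cmult (RtoC s) w)))) with (FF w).
  ring.
Qed.

Definition qf (al c xi : R) : C := (cos (-(al*(xi-c)^2)), sin (-(al*(xi-c)^2))).

Lemma FF_sigma v al c D s : al = 2*(v*v) ->
  FF (Cmult (v,v) (RtoC D)) s = qf al c (D*s + c).
Proof.
  intros Hal. unfold FF, cexp, qf, Cmult, Copp, RtoC. simpl.
  match goal with |- (exp ?A * cos ?B, exp ?A' * sin ?B') = _ =>
    replace A with 0 by ring; replace A' with 0 by ring;
    replace B with (-(al*(D*s+c-c)^2)) by (subst; ring);
    replace B' with (-(al*(D*s+c-c)^2)) by (subst; ring) end.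
  rewrite exp_0, !Rmult_1_l. reflexivity.
Qed.

Lemma ex_RInt_qf al c a b : @ex_RInt C_R_NormedModule (qf al c) a b.
Proof.
  apply (ex_RInt_fct_extend_pair (U:=R_NormedModule) (V:=R_NormedModule)); simpl;
  apply exRc; intros; auto_derive; auto.
Qed.

Lemma ex_RInt_qf_lin al c D a b : @ex_RInt C_R_NormedModule (fun s => qf al c (D*s+c)) a b.
Proof.
  apply (ex_RInt_fct_extend_pair (U:=R_NormedModule) (V:=R_NormedModule)); simpl;
  apply exRc; intros; auto_derive; auto.
Qed.

Lemma scal_C (D : R) (u : C) : @scal R_Ring (NormedModule.ModuleSpace R_AbsRing C_R_NormedModule) D u = Cmult (RtoC D) u.
Proof. destruct u. unfold Cmult, RtoC. simpl. unfold scal; simpl. unfold prod_scal; simpl.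
  unfold scal; simpl; unfold mult; simpl. f_equal; ring. Qed.

Lemma Erf_Iq v al c D : al = 2*(v*v) ->
  Erf (Cmult (v,v) (RtoC D)) =
  Cmult (RtoC (2/sqrt PI)) (Cmult (v,v) (@RInt C_R_CompleteNormedModule (qf al c) c (c+D))).
Proof.
  intros Hal. unfold Erf. f_equal.
  rewrite (@RInt_ext C_R_CompleteNormedModule _ (fun s => qf al c (D*s+c))).
  2: { intros. apply FF_sigma. exact Hal. }
  set (J := @RInt C_R_CompleteNormedModule (fun s => qf al c (D*s+c)) 0 1).
  assert (HJ : Cmult (RtoC D) J = @RInt C_R_CompleteNormedModule (qf al c) c (c+D)).
  { assert (H1 : @is_RInt C_R_NormedModule (qf al c) (D*0+c) (D*1+c) (@RInt C_R_CompleteNormedModule (qf al c) c (c+D))).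
    { replace (D*0+c) with c by ring. replace (D*1+c) with (c+D) by ring.
      apply (@RInt_correct C_R_CompleteNormedModule). apply ex_RInt_qf. }
    apply is_RInt_comp_lin in H1.
    assert (H2 : @is_RInt C_R_NormedModule (fun s => Cmult (RtoC D) (qf al c (D*s+c))) 0 1 (Cmult (RtoC D) J)).
    { apply is_RInt_Cmult. apply (@RInt_correct C_R_CompleteNormedModule). apply ex_RInt_qf_lin. }
    apply (@is_RInt_unique C_R_CompleteNormedModule) in H2.
    apply (@is_RInt_unique C_R_CompleteNormedModule) in H1.
    rewrite <- H2, <- H1. apply (@RInt_ext C_R_CompleteNormedModule). intros. symmetry. apply scal_C. }
  rewrite <- HJ. ring.
Qed.

Lemma k_bounds : 0 < 2 / sqrt PI < 2.
Proof.
  assert (H1 : 1 < sqrt PI).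
  { rewrite <- sqrt_1. apply sqrt_lt_1_alt. split. lra. pose proof PI2_1. lra. }
  split. apply Rdiv_lt_0_compat; lra.
  apply (Rmult_lt_reg_r (sqrt PI)). lra. unfold Rdiv. rewrite Rmult_assoc, Rinv_l by lra. lra.
Qed.

Lemma expm_le p : 0 < p -> exp (-(p^2)) <= 1/p.
Proof.
  intros Hp. rewrite exp_Ropp. unfold Rdiv. rewrite Rmult_1_l.
  apply Rinv_le_contravar. lra. pose proof (exp_ineq1_le (p^2)). nra.
Qed.

Lemma core_bound p : 0 < p -> Rabs (fst (Erf (p,p)) - 1) <= 6/p /\ Rabs (snd (Erf (p,p))) <= 6/p.
Proof.
  intros Hp. rewrite Erf_h. unfold Cmult, RtoC. simpl.
  pose proof k_bounds as [Hk0 Hk2]. set (k := 2 / sqrt PI) in *.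
  destruct (h_diff_bound p Hp) as [B1 B2].
  rewrite h1_0 in B1. rewrite h2_0, Rminus_0_r in B2.
  pose proof (gauss_bound p (Rlt_le _ _ Hp)) as B3. fold k in B3.
  pose proof (expm_le p Hp) as B4.
  assert (Hip : 0 < 1/p) by (apply Rdiv_lt_0_compat; lra).
  assert (Hs : k * (sqrt PI / 2) = 1).
  { unfold k. field. pose proof sqrtPI_pos. lra. }
  split.
  - replace (k * h1 p p - 0 * h2 p p - 1) with (k * (h1 p p - sqrt PI / 2)) by (rewrite <- Hs; ring).
    rewrite Rabs_mult, (Rabs_right k) by lra.
    assert (Rabs (h1 p p - sqrt PI / 2) <= 3/p).
    { replace (h1 p p - sqrt PI / 2) with ((h1 p p - gI p) + (gI p - sqrt PI / 2)) by ring.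
      eapply Rle_trans. apply Rabs_triang.
      assert (k * exp (-(p^2)) <= 2 * (1/p)).
      { apply Rmult_le_compat; try lra. left; apply exp_pos. }
      replace (3/p) with (1/p + 2*(1/p)) by (field; lra). lra. }
    replace (6/p) with (2 * (3/p)) by (field; lra).
    apply Rmult_le_compat; try lra. apply Rabs_pos.
  - replace (k * h2 p p + 0 * h1 p p) with (k * h2 p p) by ring.
    rewrite Rabs_mult, (Rabs_right k) by lra.
    replace (6/p) with (6 * (1/p)) by (field; lra).
    apply Rmult_le_compat; try lra. apply Rabs_pos.
Qed.

Lemma ballC (I y : C) (eps : posreal) :
  Rabs (fst y - fst I) < eps -> Rabs (snd y - snd I) < eps -> @ball C_R_NormedModule I eps y.
Proof.
  intros H1 H2. destruct I, y. split; simpl in *; [exact H1 | exact H2].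
Qed.

Lemma gen_left (f : R -> C) b (H : R -> C) I :
  (forall a, @is_RInt C_R_NormedModule f a b (H a)) ->
  (forall eps : posreal, exists M, forall a, a < M ->
      Rabs (fst (H a) - fst I) < eps /\ Rabs (snd (H a) - snd I) < eps) ->
  @is_RInt_gen C_R_NormedModule f (Rbar_locally m_infty) (at_point b) I.
Proof.
  intros Hf Hl P [eps HP].
  destruct (Hl eps) as [M HM].
  apply Filter_prod with (fun a => a < M) (fun x => x = b).
  - exists M. auto.
  - reflexivity.
  - intros a b' Ha Hb. subst b'. exists (H a). split. apply Hf.
    apply HP. destruct (HM a Ha). apply ballC; auto.
Qed.

Lemma gen_right (f : R -> C) b (H : R -> C) I :
  (forall a, @is_RInt C_R_NormedModule f b a (H a)) ->
  (forall eps : posreal, exists M, forall a, M < a ->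
      Rabs (fst (H a) - fst I) < eps /\ Rabs (snd (H a) - snd I) < eps) ->
  @is_RInt_gen C_R_NormedModule f (at_point b) (Rbar_locally p_infty) I.
Proof.
  intros Hf Hl P [eps HP].
  destruct (Hl eps) as [M HM].
  apply Filter_prod with (fun x => x = b) (fun a => M < a).
  - reflexivity.
  - exists M. auto.
  - intros b' a Hb Ha. subst b'. exists (H a). split. apply Hf.
    apply HP. destruct (HM a Ha). apply ballC; auto.
Qed.

Lemma sigmaD v D : Cmult (v,v) (RtoC D) = (v*D, v*D).
Proof. unfold Cmult, RtoC. simpl. f_equal; ring. Qed.

Lemma lim_Erf (K : C) v : 0 < v -> forall eps : posreal, exists M, forall D, M < D ->
  Rabs (fst (Cmult K (Cminus (Erf (Cmult (v,v) (RtoC D))) 1))) < eps /\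
  Rabs (snd (Cmult K (Cminus (Erf (Cmult (v,v) (RtoC D))) 1))) < eps.
Proof.
  intros Hv eps. destruct K as [k1 k2].
  set (S := Rabs k1 + Rabs k2 + 1).
  assert (HS : 1 <= S) by (unfold S; pose proof (Rabs_pos k1); pose proof (Rabs_pos k2); lra).
  pose proof (cond_pos eps) as He.
  exists (6 * S / (v * eps)). intros D HD.
  assert (HvE : 0 < v * eps) by nra.
  assert (HD0 : 0 < D).
  { eapply Rlt_trans; [|exact HD]. apply Rdiv_lt_0_compat; nra. }
  assert (Hp : 0 < v * D) by nra.
  rewrite sigmaD. destruct (core_bound (v*D) Hp) as [B1 B2].
  destruct (Erf (v*D, v*D)) as [e1 e2]. simpl in *.
  assert (Hq : S * (6 / (v*D)) < eps).
  { apply (Rmult_lt_reg_r (v*D)). lra.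
    replace (S * (6 / (v*D)) * (v*D)) with (6*S) by (field; lra).
    apply (Rmult_lt_reg_r (/(v*eps))). apply Rinv_0_lt_compat; lra.
    replace (eps * (v*D) * / (v*eps)) with D by (field; lra). exact HD. }
  assert (Hq0 : 0 <= 6 / (v*D)) by (left; apply Rdiv_lt_0_compat; lra).
  pose proof (Rabs_pos k1). pose proof (Rabs_pos k2).
  unfold Cminus, Cplus, Copp, Cmult, RtoC. simpl.
  replace (e2 + - 0) with e2 by ring. replace (e1 + - (1)) with (e1 - 1) by ring.
  split.
  - eapply Rle_lt_trans; [|exact Hq]. unfold Rminus at 1.
    eapply Rle_trans. apply Rabs_triang. rewrite Rabs_Ropp, !Rabs_mult.
    assert (Rabs k1 * Rabs (e1 - 1) <= Rabs k1 * (6 / (v*D))) by (apply Rmult_le_compat_l; lra).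
    assert (Rabs k2 * Rabs e2 <= Rabs k2 * (6 / (v*D))) by (apply Rmult_le_compat_l; lra).
    unfold S. nra.
  - eapply Rle_lt_trans; [|exact Hq].
    eapply Rle_trans. apply Rabs_triang. rewrite !Rabs_mult.
    assert (Rabs k1 * Rabs e2 <= Rabs k1 * (6 / (v*D))) by (apply Rmult_le_compat_l; lra).
    assert (Rabs k2 * Rabs (e1 - 1) <= Rabs k2 * (6 / (v*D))) by (apply Rmult_le_compat_l; lra).
    unfold S. nra.
Qed.

Lemma cs_mult a b : Cmult (cos a, sin a) (cos b, sin b) = (cos (a+b), sin (a+b)).
Proof. unfold Cmult. simpl. rewrite cos_plus, sin_plus. f_equal; ring. Qed.

Lemma Kint_eq lambda0 zb z x nu xi :
  0 < lambda0 -> 0 < zb -> zb < z ->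
  Kintegrand lambda0 zb z x nu xi =
  Cmult (cos (-(2*PI/lambda0/(2*z))*(nu-x)^2), sin (-(2*PI/lambda0/(2*z))*(nu-x)^2))
        (qf (2*PI/lambda0*z/(2*zb*(z-zb))) (zb*x/z + (z-zb)*nu/z) xi).
Proof.
  intros Hl Hzb Hz. unfold Kintegrand, qf. cbv zeta. rewrite !cexp_j, cs_mult, cs_mult.
  f_equal; f_equal; field; repeat split; lra.
Qed.

Ltac reqC := match goal with |- @eq _ ?a ?b => change (@eq C a b) end.

Lemma sigma_nz v : 0 < v -> (v,v) <> RtoC 0.
Proof. intros Hv H. injection H. lra. Qed.

Lemma is_RInt_Q v al c X : 0 < v -> al = 2*(v*v) ->
  @is_RInt C_R_NormedModule (qf al c) c X
    (Cmult (Cmult (RtoC (sqrt PI / 2)) (Cinv (v,v))) (Erf (Cmult (v,v) (RtoC (X-c))))).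
Proof.
  intros Hv Hal.
  rewrite (Erf_Iq v al c (X-c) Hal). replace (c + (X-c)) with X by ring.
  pose (J := (@RInt C_R_CompleteNormedModule (qf al c) c X : C)). fold J.
  replace (Cmult (Cmult (RtoC (sqrt PI / 2)) (Cinv (v, v)))
      (Cmult (RtoC (2 / sqrt PI)) (Cmult (v, v) J))) with J.
  - apply (@RInt_correct C_R_CompleteNormedModule). apply ex_RInt_qf.
  - pose proof sqrtPI_pos. reqC.
    transitivity (Cmult (RtoC (sqrt PI / 2 * (2 / sqrt PI))) (Cmult (Cmult (Cinv (v,v)) (v,v)) J)).
    + replace (sqrt PI / 2 * (2 / sqrt PI)) with 1 by (field; lra).
      rewrite Cinv_l by (apply sigma_nz; auto). ring.
    + rewrite RtoC_mult. ring.
Qed.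

Lemma is_RInt_C_eq (f : R -> C) a b (l l' : C) :
  @is_RInt C_R_NormedModule f a b l -> l = l' -> @is_RInt C_R_NormedModule f a b l'.
Proof. intros H <-. exact H. Qed.

Lemma plus_opp_C (u w : C) :
  @plus (NormedModule.AbelianMonoid R_AbsRing C_R_NormedModule) (@opp (NormedModule.AbelianGroup R_AbsRing C_R_NormedModule) u) w = Cplus (Copp u) w.
Proof. destruct u, w. reflexivity. Qed.

Lemma comp_close (Hv I Z : C) : Hv = Cplus I Z -> fst Hv - fst I = fst Z /\ snd Hv - snd I = snd Z.
Proof. intros ->. destruct I, Z. simpl. split; ring. Qed.

Lemma sigma_opp v D : Cmult (v,v) (RtoC (-D)) = Copp (Cmult (v,v) (RtoC D)).
Proof. unfold Cmult, Copp, RtoC. simpl. f_equal; ring. Qed.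

Lemma key_real lambda0 zb z : 0 < lambda0 -> 0 < zb -> zb < z ->
  sqrt (1/(lambda0*z)/2) * sqrt (2*PI/lambda0*z/(2*zb*(z-zb))/2)
  = 1/(lambda0*sqrt(zb*(z-zb))) * sqrt PI / 2.
Proof.
  intros Hl Hzb Hz.
  assert (Hz0 : 0 < z) by lra. assert (Hd : 0 < z - zb) by lra.
  assert (Hp : 0 < zb*(z-zb)) by nra.
  pose proof (sqrt_lt_R0 _ Hp) as Hsq. pose proof sqrtPI_pos.
  pose proof PI_RGT_0.
  assert (Hb : 0 < 1/(lambda0*z)/2).
  { apply Rdiv_lt_0_compat; [|lra]. apply Rdiv_lt_0_compat; nra. }
  assert (Ha : 0 < 2*PI/lambda0*z/(2*zb*(z-zb))/2).
  { apply Rdiv_lt_0_compat; [|lra]. apply Rdiv_lt_0_compat; [|nra].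
    apply Rmult_lt_0_compat; [|lra]. apply Rdiv_lt_0_compat; lra. }
  apply Rsqr_inj.
  - apply Rmult_le_pos; apply sqrt_pos.
  - apply Rmult_le_pos; [|lra]. apply Rmult_le_pos; [|lra].
    left. apply Rdiv_lt_0_compat; nra.
  - unfold Rsqr.
    replace (sqrt (1 / (lambda0 * z) / 2) * sqrt (2 * PI / lambda0 * z / (2 * zb * (z - zb)) / 2) *
             (sqrt (1 / (lambda0 * z) / 2) * sqrt (2 * PI / lambda0 * z / (2 * zb * (z - zb)) / 2)))
      with ((sqrt (1 / (lambda0 * z) / 2) * sqrt (1 / (lambda0 * z) / 2)) *
            (sqrt (2 * PI / lambda0 * z / (2 * zb * (z - zb)) / 2) * sqrt (2 * PI / lambda0 * z / (2 * zb * (z - zb)) / 2))) by ring.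
    rewrite !sqrt_sqrt.
    2: lra. 2: lra.
    replace (1 / (lambda0 * sqrt (zb * (z - zb))) * sqrt PI / 2 * (1 / (lambda0 * sqrt (zb * (z - zb))) * sqrt PI / 2))
      with ((sqrt PI * sqrt PI) / (4 * lambda0^2 * (sqrt (zb*(z-zb)) * sqrt (zb*(z-zb))))) by (field; lra).
    rewrite !sqrt_sqrt by nra. field. repeat split; lra.
Qed.

Theorem proposition1 (lambda0 zb xb1 xb2 z x nu : R) :
  0 < lambda0 -> 0 < zb -> xb1 < xb2 -> zb < z ->
  exists I1 I2 : C,
    @is_RInt_gen C_R_NormedModule (Kintegrand lambda0 zb z x nu)
      (Rbar_locally m_infty) (at_point xb1) I1 /\
    @is_RInt_gen C_R_NormedModule (Kintegrand lambda0 zb z x nu)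
      (at_point xb2) (Rbar_locally p_infty) I2 /\
    Kvalue lambda0 zb z I1 I2 = Kclosed lambda0 zb xb1 xb2 z x nu.
Proof.
  intros Hl Hzb Hx Hz.
  assert (Hz0 : 0 < z) by lra. assert (Hd : 0 < z - zb) by lra.
  set (al := 2*PI/lambda0*z/(2*zb*(z-zb))).
  assert (Hal : 0 < al).
  { unfold al. apply Rdiv_lt_0_compat; [|nra].
    apply Rmult_lt_0_compat; [|lra]. apply Rdiv_lt_0_compat; [|lra]. pose proof PI_RGT_0. lra. }
  set (v := sqrt (al/2)).
  assert (Hv : 0 < v) by (apply sqrt_lt_R0; lra).
  assert (Hvv : al = 2*(v*v)) by (unfold v; rewrite sqrt_sqrt; lra).
  set (c := zb*x/z + (z-zb)*nu/z).
  set (PP := (cos (-(2*PI/lambda0/(2*z))*(nu-x)^2), sin (-(2*PI/lambda0/(2*z))*(nu-x)^2)) : C).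
  set (rho := Cmult (RtoC (sqrt PI / 2)) (Cinv (v,v))).
  set (Q := fun X => Cmult rho (Erf (Cmult (v,v) (RtoC (X-c))))).
  assert (HQ : forall a b, @is_RInt C_R_NormedModule (Kintegrand lambda0 zb z x nu) a b
                 (Cmult PP (Cplus (Copp (Q a)) (Q b)))).
  { intros a b.
    apply (is_RInt_ext (fun xi => Cmult PP (qf al c xi))).
    { intros. symmetry. apply Kint_eq; auto. }
    apply is_RInt_Cmult.
    eapply is_RInt_C_eq.
    apply (@is_RInt_Chasles C_R_NormedModule _ a c b).
    - apply (@is_RInt_swap C_R_NormedModule). exact (is_RInt_Q v al c a Hv Hvv).
    - exact (is_RInt_Q v al c b Hv Hvv).
    - apply plus_opp_C. }
  set (E1 := Erf (Cmult (v,v) (RtoC (xb1 - c)))).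
  set (E2 := Erf (Cmult (v,v) (RtoC (xb2 - c)))).
  exists (Cmult PP (Cplus (Q xb1) rho)), (Cmult PP (Cminus rho (Q xb2))).
  split; [|split].
  - apply (gen_left _ xb1 (fun a => Cmult PP (Cplus (Copp (Q a)) (Q xb1)))).
    + intros a. apply HQ.
    + intros eps. destruct (lim_Erf (Cmult PP rho) v Hv eps) as [M HM].
      exists (c - M). intros a Ha.
      destruct (comp_close (Cmult PP (Cplus (Copp (Q a)) (Q xb1))) (Cmult PP (Cplus (Q xb1) rho))
         (Cmult (Cmult PP rho) (Cminus (Erf (Cmult (v, v) (RtoC (c - a)))) 1))) as [-> ->].
      * unfold Q. replace (a - c) with (-(c-a)) by ring. rewrite sigma_opp, Erf_opp.
        ring.
      * apply HM. lra.
  - apply (gen_right _ xb2 (fun a => Cmult PP (Cplus (Copp (Q xb2)) (Q a)))).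
    + intros a. apply HQ.
    + intros eps. destruct (lim_Erf (Cmult PP rho) v Hv eps) as [M HM].
      exists (c + M). intros a Ha.
      destruct (comp_close (Cmult PP (Cplus (Copp (Q xb2)) (Q a))) (Cmult PP (Cminus rho (Q xb2)))
         (Cmult (Cmult PP rho) (Cminus (Erf (Cmult (v, v) (RtoC (a - c)))) 1))) as [-> ->].
      * unfold Q. ring.
      * apply HM. lra.
  - unfold Kvalue, Kclosed, Ffun, Erfc. cbv zeta.
    rewrite cexp_j. fold PP.
    rewrite (Csqrt_j (2*PI/lambda0*z/(2*zb*(z-zb)))) by exact Hal. fold al. fold v.
    assert (Hb : 0 < 1/(lambda0*z)) by (apply Rdiv_lt_0_compat; nra).
    rewrite (Csqrt_j (1/(lambda0*z))) by exact Hb.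
    fold c. fold E1 E2.
    set (u := sqrt (1/(lambda0*z)/2)).
    set (kap := 1 / (lambda0 * sqrt (zb * (z - zb)))).
    assert (KE : Cmult (Cmult Cj (RtoC kap)) rho = Cmult (RtoC (1/2)) (u,u)).
    { unfold rho. pose proof sqrtPI_pos.
      assert (Huv : u * v = kap * sqrt PI / 2) by (unfold u, v, kap, al; apply key_real; auto).
      assert (H2 : Cmult (Cmult Cj (RtoC kap)) (RtoC (sqrt PI / 2)) = Cmult (Cmult (RtoC (1/2)) (u,u)) (v,v)).
      { unfold Cmult, Cj, RtoC. simpl. f_equal; nra. }
      transitivity (Cmult (Cmult (Cmult Cj (RtoC kap)) (RtoC (sqrt PI / 2))) (Cinv (v,v))). ring.
      rewrite H2. field. apply sigma_nz. exact Hv. }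
    unfold Q. fold E1 E2.
    transitivity (Cmult (Cmult (Cmult Cj (RtoC kap)) rho) (Cmult PP (Cplus (Cplus 1 E1) (Cminus 1 E2)))).
    + ring.
    + rewrite KE. ring.
Qed.
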